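(* Let $R$ be an integral domain with field of fractions $K$. If $d_1,\dots,d_n$ ($n\ge1$) are nonzero derivations on $R$ and $D=d_1\circ\cdots\circ d_n$, then $D/j$ (i.e. $x\mapsto D(x)/x$), as a map from the semigroup $R^*$ to $K$, is a generalized polynomial of degree at most $n$. If $R$ has characteristic zero, then $D/j$ has degree exactly $n$.
   Context: Rings are commutative with unit. A derivation on $R$ is a map $d\colon R\to R$ with $d(x+y)=d(x)+d(y)$ and $d(xy)=d(x)y+d(y)x$. $R^*$ is the abelian semigroup $R\setminus\{0\}$ under multiplication; $j$ is the identity map. For $f$ from an abelian semigroup $G$ to an abelian group, $\Delta_g f(x)=f(x\cdot g)-f(x)$ (using $G$'s operation); $f$ is a generalized polynomial if for some $k$, $\Delta_{g_1}\cdots\Delta_{g_{k+1}}f=0$ for all $g_i\in G$; its degree is the least such $k$ (the zero function has degree $-1$). *)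

(* Defs.v *)
From HB Require Import structures.
From mathcomp Require Import all_boot all_order all_algebra fraction.
Set Implicit Arguments. Unset Strict Implicit. Unset Printing Implicit Defensive.
Import Order.TTheory GRing.Theory Num.Theory.
Local Open Scope ring_scope.

Definition Delta (G : Type) (A : zmodType) (op : G -> G -> G) (g : G)
  (f : G -> A) : G -> A := fun x => f (op x g) - f x.

Definition iterDelta (G : Type) (A : zmodType) (op : G -> G -> G)
  (gs : seq G) (f : G -> A) : G -> A := foldr (Delta op) f gs.

Definition gpoly_deg_le (G : Type) (A : zmodType) (op : G -> G -> G)
  (f : G -> A) (k : nat) : Prop :=
  forall gs : seq G, size gs = k.+1 -> forall x : G, iterDelta op gs f x = 0.

(* f is a generalized polynomial of degree exactly n (n >= 0): degree <= n
   and not degree <= n-1 (for n = 0, "degree <= -1" means f is zero). *)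
Definition gpoly_deg_eq (G : Type) (A : zmodType) (op : G -> G -> G)
  (f : G -> A) (n : nat) : Prop :=
  gpoly_deg_le op f n /\
  ~ (if n is m.+1 then gpoly_deg_le op f m else forall x, f x = 0).

Definition nzR (R : idomainType) := {x : R | x != 0}.
Definition nzmul (R : idomainType) (x y : nzR R) : nzR R :=
  exist _ (sval x * sval y) (mulf_neq0 (svalP x) (svalP y)).

Definition is_derivation (R : comPzRingType) (d : R -> R) : Prop :=
  (forall x y, d (x + y) = d x + d y) /\
  (forall x y, d (x * y) = d x * y + d y * x).

Definition comp_list (R : Type) (ds : seq (R -> R)) : R -> R :=
  foldr (fun d acc => d \o acc) id ds.

Definition divj (R : idomainType) (D : R -> R) : nzR R -> {fraction R} :=
  fun x => tofrac (D (sval x)) / tofrac (sval x).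

(* Main.v *)
Require Import Defs.
From HB Require Import structures.
From mathcomp Require Import all_boot all_order all_algebra fraction.
From Stdlib Require Classical.
Import Order.TTheory GRing.Theory Num.Theory.
Set Implicit Arguments. Unset Strict Implicit. Unset Printing Implicit Defensive.
Local Open Scope ring_scope.

Definition degz (G : Type) (A : zmodType) (op : G -> G -> G) (k : nat) (f : G -> A) :=
  forall gs : seq G, size gs = k -> forall x, iterDelta op gs f x = 0.

Lemma iterDelta_cons (G : Type) (A : zmodType) (op : G -> G -> G) g gs (f : G -> A) x :
  iterDelta op (g :: gs) f x = iterDelta op gs f (op x g) - iterDelta op gs f x.
Proof. by []. Qed.

Lemma iterDelta_rcons (G : Type) (A : zmodType) (op : G -> G -> G) g gs (f : G -> A) :
  iterDelta op (rcons gs g) f = iterDelta op gs (Delta op g f).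
Proof. by rewrite /iterDelta foldr_rcons. Qed.

Lemma eq_iterDelta (G : Type) (A : zmodType) (op : G -> G -> G) gs (f h : G -> A) :
  f =1 h -> iterDelta op gs f =1 iterDelta op gs h.
Proof.
move=> fh; elim: gs => [|g gs IH] x //=.
by rewrite /Delta !IH.
Qed.

Lemma iterDelta_sum (G : Type) (A : comPzRingType) (op : G -> G -> G) gs
   (I : Type) (s : seq I) (P : pred I) (c : I -> A) (h : I -> G -> A) x :
  iterDelta op gs (fun y => \sum_(i <- s | P i) c i * h i y) x =
  \sum_(i <- s | P i) c i * iterDelta op gs (h i) x.
Proof.
elim: gs x => [|g gs IH] x //.
rewrite !iterDelta_cons !IH -sumrB; apply: eq_bigr => i _.
by rewrite mulrBr.
Qed.

Lemma degzS (G : Type) (A : zmodType) (op : G -> G -> G) k (f : G -> A) :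
  (forall g, degz op k (Delta op g f)) -> degz op k.+1 f.
Proof.
move=> H gs; case/lastP: gs => [|gs g] //; rewrite size_rcons => -[sz] x.
by rewrite iterDelta_rcons; apply: H.
Qed.

Lemma degz_mono (G : Type) (A : zmodType) (op : G -> G -> G) k m (f : G -> A) :
  (k <= m)%N -> degz op k f -> degz op m f.
Proof.
move=> /subnK <-; elim: (m - k)%N => [|n IH] // H [|g gs] //= [sz] x.
by rewrite /Delta !(IH H) // subrr.
Qed.

Definition cl (R : Type) (I : Type) (dd : I -> R -> R) (s : seq I) : R -> R :=
  comp_list (map dd s).

Fixpoint pairs (I : Type) (s : seq I) : seq (seq I * seq I) :=
  match s with
  | [::] => [:: ([::], [::])]
  | i :: s' => [seq (i :: p.1, p.2) | p <- pairs s'] ++ [seq (p.1, i :: p.2) | p <- pairs s']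
  end.

Lemma deriv0 (R : comPzRingType) (d : R -> R) : is_derivation d -> d 0 = 0.
Proof.
case=> hD _; have := hD 0 0; rewrite addr0 => /eqP.
by rewrite -subr_eq subrr eq_sym => /eqP.
Qed.

Lemma deriv_sum (R : comPzRingType) (d : R -> R) (J : Type) (s : seq J) (F : J -> R) :
  is_derivation d -> d (\sum_(j <- s) F j) = \sum_(j <- s) d (F j).
Proof.
move=> hd; elim: s => [|j s IH]; first by rewrite !big_nil deriv0.
by rewrite !big_cons hd.1 IH.
Qed.

Lemma leibniz (R : comPzRingType) (I : eqType) (dd : I -> R -> R) (s : seq I) :
  {in s, forall i, is_derivation (dd i)} ->
  forall x y, cl dd s (x * y) = \sum_(p <- pairs s) cl dd p.1 x * cl dd p.2 y.
Proof.
elim: s => [|i s IH] hs x y; first by rewrite big_seq1.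
have hi : is_derivation (dd i) by apply: hs; rewrite mem_head.
have hs' : {in s, forall j, is_derivation (dd j)}.
  by move=> j js; apply: hs; rewrite in_cons js orbT.
rewrite /= big_cat !big_map /=.
rewrite [cl dd (i :: s) (x * y)]/cl /= -/(cl dd s) IH // deriv_sum //.
rewrite -big_split /=; apply: eq_bigr => p _.
by rewrite (proj2 hi) [X in _ + X]mulrC.
Qed.

Lemma pairs_perm (I : eqType) (s : seq I) p : p \in pairs s -> perm_eq (p.1 ++ p.2) s.
Proof.
elim: s p => [|i s IH] p /=; first by rewrite inE => /eqP ->.
rewrite mem_cat => /orP [] /mapP [q qin ->] /=.
  by rewrite perm_cons IH.
by rewrite -cat1s perm_catCA /= perm_cons IH.
Qed.

Lemma pairs_nil (I : eqType) (s : seq I) :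
  [seq p <- pairs s | p.2 == [::]] = [:: (s, [::])].
Proof.
elim: s => [|i s IH] //=.
rewrite filter_cat !filter_map /= IH /=.
by rewrite (@eq_filter _ _ pred0) // filter_pred0.
Qed.

Lemma pairs_count1 (I : eqType) (s : seq I) :
  count (fun p => size p.2 == 1)%N (pairs s) = size s.
Proof.
elim: s => [|i s IH] //=.
rewrite count_cat !count_map /=.
rewrite (@eq_count _ _ (fun p => size p.2 == 1)%N) // IH.
rewrite (@eq_count _ _ (fun p => p.2 == [::])); last by case=> ? [].
by rewrite -size_filter pairs_nil addn1.
Qed.

Definition Fq (R : idomainType) (I : Type) (dd : I -> R -> R) (s : seq I) :
  nzR R -> {fraction R} := divj (cl dd s).

Lemma tofrac_nz (R : idomainType) (g : nzR R) : tofrac (sval g) != 0 :> {fraction R}.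
Proof. by rewrite tofrac_eq0; case: g. Qed.

Lemma Fq_nil (R : idomainType) (I : Type) (dd : I -> R -> R) g : Fq dd [::] g = 1.
Proof. by rewrite /Fq /divj /= divff // tofrac_nz. Qed.

Lemma Fq_mul (R : idomainType) (I : eqType) (dd : I -> R -> R) (s : seq I) :
  {in s, forall i, is_derivation (dd i)} ->
  forall x g, Fq dd s (nzmul x g) = \sum_(p <- pairs s) Fq dd p.1 x * Fq dd p.2 g.
Proof.
move=> hs x g; rewrite /Fq /divj /= leibniz // tofracM.
rewrite (rmorph_sum (@tofrac R)) mulr_suml; apply: eq_bigr => p _.
by rewrite rmorphM -mulf_div.
Qed.

Lemma Delta_Fq (R : idomainType) (I : eqType) (dd : I -> R -> R) (s : seq I) :
  {in s, forall i, is_derivation (dd i)} ->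
  forall g x, Delta (@nzmul R) g (Fq dd s) x =
     \sum_(p <- pairs s | p.2 != [::]) Fq dd p.2 g * Fq dd p.1 x.
Proof.
move=> hs g x; rewrite /Delta Fq_mul // (bigID (fun p => p.2 == [::])) /=.
rewrite -big_filter pairs_nil big_seq1 /= Fq_nil mulr1 addrC addrK.
by apply: eq_bigr => p _; rewrite mulrC.
Qed.

Lemma pairs_sub (I : eqType) (s : seq I) p :
  p \in pairs s -> {subset p.1 <= s} /\ (size p.1 + size p.2 = size s)%N.
Proof.
move=> /pairs_perm pp; split; last by rewrite -size_cat (perm_size pp).
by move=> i ip; rewrite -(perm_mem pp) mem_cat ip.
Qed.

Lemma Fq_deg_step (R : idomainType) (I : eqType) (dd : I -> R -> R) (s : seq I) :
  (forall t, (size t < size s)%N -> {in t, forall i, is_derivation (dd i)} ->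
     degz (@nzmul R) (size t).+1 (Fq dd t)) ->
  {in s, forall i, is_derivation (dd i)} -> degz (@nzmul R) (size s).+1 (Fq dd s).
Proof.
move=> IH hs; apply: degzS => g gs sz x.
rewrite (eq_iterDelta (@nzmul R) gs (Delta_Fq hs g)) iterDelta_sum big1_seq // => p /andP [pn pin].
have [sub szp] := pairs_sub pin.
have lt : (size p.1 < size s)%N.
  by rewrite -szp -{1}[size p.1]addn0 ltn_add2l lt0n size_eq0.
have hp : {in p.1, forall i, is_derivation (dd i)} by move=> i /sub; apply: hs.
by rewrite (degz_mono lt (IH _ lt hp)) // mulr0.
Qed.

Lemma Fq_deg (R : idomainType) (I : eqType) (dd : I -> R -> R) (s : seq I) :
  {in s, forall i, is_derivation (dd i)} -> degz (@nzmul R) (size s).+1 (Fq dd s).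
Proof.
have [n] := ubnP (size s); elim: n s => [|n IH] s // szs hs.
apply: Fq_deg_step hs => t lt ht; apply: IH ht.
exact: leq_trans lt _.
Qed.

Lemma nseqSr (T : Type) n (g : T) : nseq n.+1 g = rcons (nseq n g) g.
Proof. by elim: n => [|n IH] //=; rewrite -IH. Qed.

Lemma Fq_top_step (R : idomainType) (I : eqType) (dd : I -> R -> R) (s : seq I) :
  (forall t, (size t < size s)%N -> {in t, forall i, is_derivation (dd i)} ->
     forall g x, iterDelta (@nzmul R) (nseq (size t) g) (Fq dd t) x =
       (size t)`!%:R * \prod_(i <- t) Fq dd [:: i] g) ->
  {in s, forall i, is_derivation (dd i)} ->
  forall g x, iterDelta (@nzmul R) (nseq (size s) g) (Fq dd s) x =
       (size s)`!%:R * \prod_(i <- s) Fq dd [:: i] g.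
Proof.
move=> IH hs g x.
case Es: (size s) => [|n].
  by move/size0nil: Es => ->; rewrite /= Fq_nil big_nil mulr1.
rewrite nseqSr iterDelta_rcons.
rewrite (eq_iterDelta (@nzmul R) _ (Delta_Fq hs g)) iterDelta_sum.
rewrite (bigID (fun p => size p.2 == 1)%N) /=.
rewrite [X in _ + X]big1_seq ?addr0; last first.
  move=> p /andP [/andP [pn p1] pin].
  have [sub szp] := pairs_sub pin.
  have lt : ((size p.1).+1 < size s)%N.
    rewrite -szp -addn1 ltn_add2l; move: pn p1; case: (p.2) => [|a [|b q]] //.
  have hp : {in p.1, forall i, is_derivation (dd i)} by move=> i /sub; apply: hs.
  have le : ((size p.1).+1 <= n)%N by rewrite -ltnS -Es.
  by rewrite (degz_mono le (Fq_deg hp)) ?size_nseq // mulr0.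
rewrite [LHS]big_seq_cond.
rewrite (eq_bigr (fun _ => n`!%:R * \prod_(i <- s) Fq dd [:: i] g)); last first.
  move=> p /andP [pin] /andP [pn p1].
  have [sub szp] := pairs_sub pin.
  have pp := pairs_perm pin.
  have hp : {in p.1, forall i, is_derivation (dd i)} by move=> i /sub; apply: hs.
  move: pp szp; case: p pin pn p1 sub hp => p1 [|a [|b q]] //= pin _ _ sub hp pp szp.
  have szp1 : size p1 = n by move: szp; rewrite Es addn1 => -[].
  have lt : (size p1 < size s)%N by rewrite Es szp1.
  rewrite -szp1 IH // szp1 -(perm_big _ pp) big_cat big_seq1 /=.
  by rewrite mulrCA [X in _ * X]mulrC.
rewrite -[LHS]big_seq_cond big_const_seq iter_addr_0.
rewrite (@eq_count _ _ (fun p => size p.2 == 1)%N); last by case=> ? [|? []].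
by rewrite pairs_count1 Es factS natrM -mulrnAl [in RHS]mulr_natl.
Qed.

Lemma Fq_top (R : idomainType) (I : eqType) (dd : I -> R -> R) (s : seq I) :
  {in s, forall i, is_derivation (dd i)} ->
  forall g x, iterDelta (@nzmul R) (nseq (size s) g) (Fq dd s) x =
       (size s)`!%:R * \prod_(i <- s) Fq dd [:: i] g.
Proof.
have [n] := ubnP (size s); elim: n s => [|n IH] s // szs hs.
apply: Fq_top_step hs => t lt ht; apply: IH ht.
exact: leq_trans lt _.
Qed.

Lemma mulrn_inj (R : idomainType) : [pchar R] =i pred0 ->
  forall (x : R) a b, x != 0 -> x *+ a = x *+ b -> a = b.
Proof.
move=> /pcharf0P c0 x.
have key : forall a b, (a <= b)%N -> x != 0 -> x *+ a = x *+ b -> a = b.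
  move=> a b ab xn0; rewrite -(subnKC ab) mulrnDr -[LHS]addr0 => /addrI /esym /eqP.
  rewrite -mulr_natr mulf_eq0 (negbTE xn0) /= c0 subn_eq0.
  by move=> ba; rewrite (eqP (_ : b - a == 0)%N) ?addn0 // subn_eq0.
move=> a b xn0 e; case: (leqP a b) => [ab|/ltnW ba]; first exact: key.
by apply/esym/key.
Qed.

Lemma pigeon (R : idomainType) : [pchar R] =i pred0 ->
  forall s : seq (R * R), (forall u, u \in s -> u.2 != 0 \/ u.1 != 0) ->
  exists t : nat, forall u, u \in s -> u.1 + u.2 *+ t != 0.
Proof.
move=> c0 s hs.
pose bad t := has (fun u : R * R => u.1 + u.2 *+ t == 0) s.
case: (boolP (all bad (iota 0 (size s).+1))) => [allb|]; last first.
  case/allPn => t _ /hasPn nb; exists t => u us; exact: nb.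
exfalso.
pose f t := find (fun u : R * R => u.1 + u.2 *+ t == 0) s.
have fin : forall t, t \in iota 0 (size s).+1 -> (f t < size s)%N.
  by move=> t tin; rewrite /f -has_find; exact: (allP allb).
have inj : {in iota 0 (size s).+1 &, injective f}.
  move=> t1 t2 t1in t2in e.
  have h1 := fin _ t1in.
  have n1 := nth_find (0, 0) (allP allb _ t1in).
  have n2 := nth_find (0, 0) (allP allb _ t2in).
  rewrite -/(f t1) -/(f t2) -e in n1 n2.
  set u := nth (0, 0) s (f t1) in n1 n2.
  have us : u \in s by apply: mem_nth.
  have [u2|u1] := hs u us.
    apply: (mulrn_inj c0 u2); apply: (@addrI _ u.1).
    by rewrite (eqP n1) (eqP n2).
  case: (eqVneq u.2 0) => [u20|u2].
    by move: n1; rewrite u20 mul0rn addr0 (negbTE u1).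
  apply: (mulrn_inj c0 u2); apply: (@addrI _ u.1).
  by rewrite (eqP n1) (eqP n2).
have := uniq_leq_size (etrans (map_inj_in_uniq inj) (iota_uniq 0 (size s).+1))
   (s2 := iota 0 (size s)).
rewrite size_map !size_iota ltnn => H; apply: notF; apply: H.
by move=> i /mapP [t tin ->]; rewrite mem_iota add0n fin.
Qed.

Lemma deriv_mulrn (R : comPzRingType) (d : R -> R) x n :
  is_derivation d -> d (x *+ n) = d x *+ n.
Proof.
move=> hd; elim: n => [|n IH]; first by rewrite !mulr0n deriv0.
by rewrite !mulrS hd.1 IH.
Qed.

Lemma common (R : idomainType) : [pchar R] =i pred0 ->
  forall (I : eqType) (dd : I -> R -> R) (s : seq I),
  {in s, forall i, is_derivation (dd i)} ->
  {in s, forall i, exists x, dd i x != 0} ->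
  exists g, forall i, i \in s -> dd i g != 0.
Proof.
move=> c0 I dd; elim=> [|i s IH] hs hnz; first by exists 0.
have [||a ha] := IH.
- by move=> j js; apply: hs; rewrite in_cons js orbT.
- by move=> j js; apply: hnz; rewrite in_cons js orbT.
have [b hb] := hnz i (mem_head _ _).
have hp : forall u, u \in [seq (dd j a, dd j b) | j <- i :: s] -> u.2 != 0 \/ u.1 != 0.
  move=> u /mapP [j jin ->] /=.
  case: (eqVneq j i) => [->|ji]; first by left.
  by right; apply: ha; move: jin; rewrite in_cons (negbTE ji).
have [t ht] := pigeon c0 hp.
exists (a + b *+ t) => j jin.
have hj := hs j jin.
rewrite (proj1 hj) deriv_mulrn //.
by have := ht (dd j a, dd j b) (map_f _ jin).
Qed.

Unset Implicit Arguments.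
Set Strict Implicit.

Theorem lemma2p4 (R : idomainType) (ds : seq (R -> R)) :
  (0 < size ds)%N ->
  (forall i : 'I_(size ds), is_derivation (nth id ds i) /\ ~ (forall x, nth id ds i x = 0)) ->
  gpoly_deg_le (@nzmul R) (divj (comp_list ds)) (size ds) /\
  ([pchar R] =i pred0 ->
     gpoly_deg_eq (@nzmul R) (divj (comp_list ds)) (size ds)).
Proof.
move=> npos H.
set s := iota 0 (size ds).
have eF : divj (comp_list ds) = Fq (nth id ds) s.
  by rewrite /Fq /cl /s map_nth_iota0 // take_size.
have szs : size s = size ds by rewrite size_iota.
have hs : {in s, forall i, is_derivation (nth id ds i)}.
  by move=> i; rewrite mem_iota add0n => lt; exact: (H (Ordinal lt)).1.
have part1 : gpoly_deg_le (@nzmul R) (divj (comp_list ds)) (size ds).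
  by move=> gs sz x; rewrite eF; apply: (Fq_deg hs); rewrite szs.
split=> // c0; split=> //.
have hnz : {in s, forall i, exists x, nth id ds i x != 0}.
  move=> i; rewrite mem_iota add0n => lt.
  have [x hx] := Classical_Pred_Type.not_all_ex_not _ _ (H (Ordinal lt)).2.
  by exists x; apply/eqP.
have [g hg] := common c0 hs hnz.
have g0 : g != 0.
  have i0 : 0%N \in s by rewrite mem_iota.
  apply: (contraNneq _ (hg _ i0)) => ->.
  by rewrite deriv0 //; exact: hs.
pose gg : nzR R := exist _ g g0.
case Eds: (size ds) npos => [|m] // _.
move=> Hm; have := Hm (nseq m.+1 gg) (size_nseq _ _) gg.
rewrite eF -Eds -szs Fq_top //; apply/eqP; rewrite mulf_eq0 negb_or.
rewrite szs Eds; apply/andP; split.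
  by rewrite -(rmorph_nat (@tofrac R)) tofrac_eq0 (pcharf0P _).1 // -lt0n fact_gt0.
rewrite prodf_seq_neq0; apply/allP => i iin /=.
rewrite /Fq /divj /= mulf_neq0 ?invr_eq0 ?tofrac_eq0 //.
exact: hg.
Qed.
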